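(* Let $\rho_n=6-4\big(1+\frac1n\big)^{3/2}-4\big(1-\frac1n\big)^{3/2}+\big(1+\frac2n\big)^{3/2}+\big(1-\frac2n\big)^{3/2}$ for $n\ge2$. For every finitely supported complex sequence $\{A_n\}_{n\ge0}$ with $A_0=A_1=0$, not identically zero, and with the convention $A_{-1}=0$, $$\sum_{n=1}^\infty|A_n-2A_{n-1}+A_{n-2}|^2\ \ge\ \sum_{n=2}^\infty\rho_n|A_n|^2\ >\ \frac{9}{16}\sum_{n=2}^\infty\frac{|A_n|^2}{n^4}\ \ge\ \frac{9}{16}\sum_{n=1}^\infty\frac{|A_n|^2}{n^2(n+1)^2}.$$
   Context: $\rho_n=((-\Delta)^2 n^{3/2})/n^{3/2}$ is the improved Rellich weight of Gerhat–Krejčiřík–Štampach, where $(-\Delta)$ is the discrete Dirichlet Laplacian $((-\Delta)A)_n=2A_n-A_{n-1}-A_{n+1}$. The left side is $\sum_n|(\nabla^2A)_n|^2$ with $\nabla$ the backward difference; this is the inequality form used to relate the order-2 Knopp inequality to the Rellich inequality. *)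

(* Defs.v *)
From Stdlib Require Import Reals.
From Coquelicot Require Import Coquelicot.
Open Scope R_scope.

(* x^(3/2) for x >= 0, written as x * sqrt x (so that 0^(3/2) = 0). *)
Definition pow32 (x : R) : R := x * sqrt x.

Definition rho (n : nat) : R :=
  6 - 4 * pow32 (1 + 1 / INR n) - 4 * pow32 (1 - 1 / INR n)
    + pow32 (1 + 2 / INR n) + pow32 (1 - 2 / INR n).

(* Second backward difference (nabla^2 A)_n = A_n - 2 A_{n-1} + A_{n-2},
   with the convention A_{-1} = 0 (only n >= 1 is used). *)
Definition second_diff (A : nat -> C) (n : nat) : C :=
  match n with
  | O => A O
  | S O => Cminus (A 1%nat) (Cmult (RtoC 2) (A O))
  | S (S m as k) => Cplus (Cminus (A (S k)) (Cmult (RtoC 2) (A k))) (A m)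
  end.

Definition finitely_supported (A : nat -> C) : Prop :=
  exists N : nat, forall n : nat, (N < n)%nat -> A n = RtoC 0.

(* Main.v *)
Require Import Defs.
From Stdlib Require Import Reals Lra Lia Psatz.
From Coquelicot Require Import Coquelicot.
Open Scope R_scope.
Lemma powge (m c : R) (k : nat) : 0 <= c -> c <= m -> c ^ k <= m ^ k.
Proof. intros. apply pow_incr; lra. Qed.

Lemma qLP (m : R) : 7/10 <= m -> m <= 1 ->
  0 <= -2 -2*m + m^2 + 4*m^3 + 25/4*m^4 + 7*m^5 + 49/8*m^6 + 7/2*m^7 + 7/8*m^8.
Proof. intros.
  pose proof (powge m (7/10) 2 ltac:(lra) H).
  pose proof (powge m (7/10) 3 ltac:(lra) H).
  pose proof (powge m (7/10) 4 ltac:(lra) H).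
  pose proof (powge m (7/10) 5 ltac:(lra) H).
  pose proof (powge m (7/10) 6 ltac:(lra) H).
  pose proof (powge m (7/10) 7 ltac:(lra) H).
  pose proof (powge m (7/10) 8 ltac:(lra) H).
  simpl in *. lra. Qed.

Lemma qUQ (m : R) : 7/10 <= m -> m <= 1 -> 0 <= -2 + 2*m + 2*m^2 + m^3.
Proof. intros.
  pose proof (powge m (7/10) 2 ltac:(lra) H).
  pose proof (powge m (7/10) 3 ltac:(lra) H). simpl in *. lra. Qed.

Lemma powle1 (m : R) (k : nat) : 0 <= m -> m <= 1 -> m ^ k <= 1.
Proof. intros. rewrite <- (pow1 k). apply pow_incr; lra. Qed.

Lemma qUP (m : R) : 96/100 <= m -> m <= 1 ->
  0 <= 2 - 3*m^2 - 3*m^3 - 9/4*m^4 - 3/4*m^5 + 2*m^6 + 6*m^7 + 6*m^8 + 2*m^9.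
Proof. intros.
  pose proof (powle1 m 2 ltac:(lra) H0).
  pose proof (powle1 m 3 ltac:(lra) H0).
  pose proof (powle1 m 4 ltac:(lra) H0).
  pose proof (powle1 m 5 ltac:(lra) H0).
  pose proof (powge m (96/100) 6 ltac:(lra) H).
  pose proof (powge m (96/100) 7 ltac:(lra) H).
  pose proof (powge m (96/100) 8 ltac:(lra) H).
  pose proof (powge m (96/100) 9 ltac:(lra) H).
  simpl in *. lra. Qed.


Lemma param (y : R) : 0 <= y <= 1 -> exists m s, 0 <= s /\ 7/10 <= m <= 1 /\ 1/2 <= m^2 /\
  m^2 + s^2 = 1 /\ y = 2*m*s /\ pow32 (1+y) + pow32 (1-y) = 6*m - 4*m^3 /\
  pow32 (1+y) - pow32 (1-y) = 6*s - 4*s^3.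
Proof.
  intros Hy.
  set (a := sqrt (1+y)). set (b := sqrt (1-y)).
  assert (Ha : a * a = 1 + y) by (apply sqrt_sqrt; lra).
  assert (Hb : b * b = 1 - y) by (apply sqrt_sqrt; lra).
  assert (a0 : 0 <= a) by apply sqrt_pos.
  assert (b0 : 0 <= b) by apply sqrt_pos.
  assert (ab : b <= a) by (apply sqrt_le_1_alt; lra).
  exists ((a+b)/2), ((a-b)/2).
  unfold pow32. fold a b. rewrite <- Ha, <- Hb.
  assert (0 <= a*b) by nra.
  repeat split; try nra.
Qed.

Lemma P_lower (y : R) : 0 <= y <= 1 ->
  2 + 3/4*y^2 + 3/64*y^4 + 7/512*y^6 <= pow32 (1+y) + pow32 (1-y).
Proof.
  intros Hy. destruct (param y Hy) as (m & s & s0 & Hm & Hm2 & Hms & Hy2 & HP & HQ).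
  rewrite HP.
  assert (Y : y^2 = 4*m^2*(1-m^2)) by (rewrite Hy2; replace (1-m^2) with (s^2) by lra; ring).
  replace (y^4) with ((y^2)^2) by ring. replace (y^6) with ((y^2)^3) by ring. rewrite Y.
  pose proof (qLP m (proj1 Hm) (proj2 Hm)).
  assert (0 <= (1-m)^4) by (apply pow_le; lra).
  match goal with |- ?L <= ?R => assert (R - L = (1-m)^4 *
   (-2 -2*m + m^2 + 4*m^3 + 25/4*m^4 + 7*m^5 + 49/8*m^6 + 7/2*m^7 + 7/8*m^8)) by field end.
  nra.
Qed.

Lemma P_upper (y : R) : 0 <= y <= 1/2 ->
  pow32 (1+y) + pow32 (1-y) <= 2 + 3/4*y^2 + 3/64*y^4 + 1/32*y^6.
Proof.
  intros Hy. destruct (param y ltac:(lra)) as (m & s & s0 & Hm & Hm2 & Hms & Hy2 & HP & HQ).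
  rewrite HP.
  assert (Y : y^2 = 4*m^2*(1-m^2)) by (rewrite Hy2; replace (1-m^2) with (s^2) by lra; ring).
  assert (y^2 <= 1/4) by nra.
  assert (m^2 >= 93/100).
  { set (u := m^2) in *. destruct (Rlt_or_le u (93/100)); [|lra].
    assert ((u-1/2)^2 < 3/16) by nra. nra. }
  assert (m >= 96/100) by nra.
  replace (y^4) with ((y^2)^2) by ring. replace (y^6) with ((y^2)^3) by ring. rewrite Y.
  pose proof (qUP m ltac:(lra) (proj2 Hm)).
  assert (0 <= (1-m)^3) by (apply pow_le; lra).
  match goal with |- ?L <= ?R => assert (R - L = (1-m)^3 *
   (2 - 3*m^2 - 3*m^3 - 9/4*m^4 - 3/4*m^5 + 2*m^6 + 6*m^7 + 6*m^8 + 2*m^9)) by field end.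
  nra.
Qed.

Lemma Q_bounds (y : R) : 0 <= y <= 1 ->
  3*y - y^3/8 - y^5 <= pow32 (1+y) - pow32 (1-y) <= 3*y - y^3/8.
Proof.
  intros Hy. destruct (param y Hy) as (m & s & s0 & Hm & Hm2 & Hms & Hy2 & HP & HQ).
  rewrite HQ, Hy2.
  pose proof (qUQ m (proj1 Hm) (proj2 Hm)).
  assert (S2 : s^2 = 1 - m^2) by lra.
  assert (0 <= (1-m)^2) by (apply pow_le; lra).
  assert (E1 : 3*(2*m*s) - (2*m*s)^3/8 - (6*s - 4*s^3) = s * (1-m)^2 * (-2 + 2*m + 2*m^2 + m^3)).
  { replace (s^3) with (s*s^2) by ring.
    replace ((2*m*s)^3) with (8*m^3*s*s^2) by ring. rewrite S2. field. }
  assert (E2 : (6*s - 4*s^3) - (3*(2*m*s) - (2*m*s)^3/8 - (2*m*s)^5) =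
     s * (1-m)^2 * (32*m^5*(1+m)^2 - (-2 + 2*m + 2*m^2 + m^3))).
  { replace (s^3) with (s*s^2) by ring.
    replace ((2*m*s)^3) with (8*m^3*s*s^2) by ring.
    replace ((2*m*s)^5) with (32*m^5*s*(s^2)^2) by ring. rewrite S2. field. }
  assert (m^5 >= 16/100).
  { pose proof (powge m (7/10) 5 ltac:(lra) (proj1 Hm)). simpl in *. lra. }
  assert (32*m^5*(1+m)^2 >= 3 + 0) by nra.
  assert (-2 + 2*m + 2*m^2 + m^3 <= 3) by nra.
  assert (0 <= s*(1-m)^2) by (apply Rmult_le_pos; lra).
  assert (0 <= s*(1-m)^2 * (32*m^5*(1+m)^2 - (-2 + 2*m + 2*m^2 + m^3))) by (apply Rmult_le_pos; lra).
  assert (0 <= s*(1-m)^2 * (-2 + 2*m + 2*m^2 + m^3)) by (apply Rmult_le_pos; lra).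
  split; lra.
Qed.

Definition g (k : nat) : R := INR k * sqrt (INR k).
Definition h (k : nat) : R := g k - g (pred k).
Definition U (k : nat) : R := 2 * h k - h (pred k) - h (S k).

Lemma scale (c t : R) : 0 < c -> 0 <= t -> t * sqrt t = c * sqrt c * pow32 (t / c).
Proof.
  intros Hc Ht. unfold pow32. rewrite sqrt_div by lra.
  assert (0 < sqrt c) by (apply sqrt_lt_R0; lra). field. lra.
Qed.

Lemma xsqrt_lt (x y : R) : 0 <= y -> y < x -> y * sqrt y < x * sqrt x.
Proof.
  intros. assert (sqrt y < sqrt x) by (apply sqrt_lt_1_alt; lra).
  assert (0 <= sqrt y) by apply sqrt_pos. nra.
Qed.

Lemma g_pos (k : nat) : (1 <= k)%nat -> 0 < g k.
Proof.
  intros. unfold g. assert (1 <= INR k) by (apply (le_INR 1); lia).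
  pose proof (xsqrt_lt (INR k) 0 ltac:(lra) ltac:(lra)). lra.
Qed.

Lemma h_pos (k : nat) : (1 <= k)%nat -> 0 < h k.
Proof.
  intros. unfold h, g. destruct k as [|k]; [lia|]. simpl pred.
  rewrite S_INR. pose proof (pos_INR k).
  pose proof (xsqrt_lt (INR k + 1) (INR k) ltac:(lra) ltac:(lra)). lra.
Qed.

Lemma U_nonneg (k : nat) : 0 <= U (S (S k)).
Proof.
  unfold U, h. simpl pred. unfold g.
  rewrite !S_INR. pose proof (pos_INR k) as Hk.
  set (x := INR k). assert (Hx : 0 <= x) by apply pos_INR. set (c := x + 3/2).
  assert (Hc : 0 < c) by (unfold c; lra).
  set (z := 1 / (2*x + 3)).
  assert (Hz : 0 < z <= 1/3).
  { unfold z. split. apply Rdiv_lt_0_compat; lra.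
    apply (Rmult_le_reg_r (2*x+3)); [lra|]. field_simplify; lra. }
  rewrite (scale c (x+1+1+1)), (scale c (x+1+1)), (scale c (x+1)), (scale c x) by lra.
  replace ((x+1+1+1)/c) with (1 + 3*z) by (unfold z, c; field; lra).
  replace ((x+1+1)/c) with (1 + z) by (unfold z, c; field; lra).
  replace ((x+1)/c) with (1 - z) by (unfold z, c; field; lra).
  replace (x/c) with (1 - 3*z) by (unfold z, c; field; lra).
  pose proof (Q_bounds z ltac:(lra)) as [Q1 _].
  pose proof (Q_bounds (3*z) ltac:(lra)) as [_ Q2].
  assert (0 < c * sqrt c) by (pose proof (xsqrt_lt c 0 ltac:(lra) Hc); lra).
  assert (0 <= 3*z^3 - 3*z^5).
  { replace (3*z^3 - 3*z^5) with (3*z^3*(1-z^2)) by ring.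
    apply Rmult_le_pos. assert (0 <= z^3) by (apply pow_le; lra). lra. nra. }
  assert (0 <= 3 * (pow32 (1+z) - pow32 (1-z)) - (pow32 (1+3*z) - pow32 (1-3*z))) by nra.
  nra.
Qed.

Lemma rho_id (k : nat) : rho (S (S k)) * g (S (S k)) = U (S (S k)) - U (S (S (S k))).
Proof.
  unfold rho, U, h. simpl pred. unfold g.
  rewrite !S_INR.
  set (x := INR k). assert (Hx : 0 <= x) by apply pos_INR. set (n := x + 1 + 1).
  assert (0 < n) by (unfold n; lra).
  rewrite (scale n (n+1+1)), (scale n (n+1)), (scale n (x+1)), (scale n x) by (unfold n; lra).
  replace ((n+1+1)/n) with (1 + 2 / n) by (unfold n; field; lra).
  replace ((n+1)/n) with (1 + 1 / n) by (unfold n; field; lra).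
  replace ((x+1)/n) with (1 - 1 / n) by (unfold n; field; lra).
  replace (x/n) with (1 - 2 / n) by (unfold n; field; lra).
  fold n. ring.
Qed.

Lemma rho_lower (n : nat) : (2 <= n)%nat -> 9/16 * / INR n ^ 4 < rho n.
Proof.
  intros Hn. assert (H2 : 2 <= INR n) by (apply (le_INR 2); lia).
  set (x := 1 / INR n).
  assert (Hx : 0 < x <= 1/2).
  { unfold x. split. apply Rdiv_lt_0_compat; lra.
    apply (Rmult_le_reg_r (INR n)); [lra|]. field_simplify; lra. }
  replace (/ INR n ^ 4) with (x^4) by (unfold x; field; lra).
  unfold rho. fold x. replace (2 / INR n) with (2 * x) by (unfold x; field; lra).
  pose proof (P_lower (2*x) ltac:(lra)).
  pose proof (P_upper x ltac:(lra)).
  assert (0 < x^6) by (apply pow_lt; lra).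
  nra.
Qed.

Fixpoint sm (f : nat -> R) (k : nat) : R :=
  match k with O => 0 | S k' => sm f k' + f (S (S k')) end.

Lemma sm_le (f f' : nat -> R) k : (forall n, (2 <= n)%nat -> f n <= f' n) -> sm f k <= sm f' k.
Proof. intros H. induction k; simpl. lra. pose proof (H (S (S k)) ltac:(lia)). lra. Qed.

Lemma sm_ext (f f' : nat -> R) k : (forall n, (2 <= n)%nat -> f n = f' n) -> sm f k = sm f' k.
Proof. intros H. induction k; simpl. lra. rewrite (H (S (S k)) ltac:(lia)). lra. Qed.

Lemma sm_plus (f f' : nat -> R) k : sm (fun n => f n + f' n) k = sm f k + sm f' k.
Proof. induction k; simpl. lra. rewrite IHk. lra. Qed.

Lemma sm_minus (f f' : nat -> R) k : sm (fun n => f n - f' n) k = sm f k - sm f' k.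
Proof. induction k; simpl. lra. rewrite IHk. lra. Qed.

Lemma sm_scal (c : R) (f : nat -> R) k : sm (fun n => c * f n) k = c * sm f k.
Proof. induction k; simpl. lra. rewrite IHk. lra. Qed.

Lemma sm_shift (X Y : nat -> R) k :
  sm (fun n => X n + Y n) k = sm (fun n => X n + Y (S n)) k + Y 2%nat - Y (S (S k)).
Proof. induction k; simpl. lra. rewrite IHk. lra. Qed.

Lemma sm_pos (f : nat -> R) k j : (forall n, (2 <= n)%nat -> 0 <= f n) ->
  (2 <= j <= S k)%nat -> 0 < f j -> 0 < sm f k.
Proof.
  intros H. induction k; intros Hj Hf. lia. simpl.
  destruct (Nat.eq_dec j (S (S k))) as [->|ne].
  - assert (0 <= sm f k).
    { clear -H. induction k; simpl. lra. pose proof (H (S (S k)) ltac:(lia)). lra. }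
    lra.
  - pose proof (IHk ltac:(lia) Hf). pose proof (H (S (S k)) ltac:(lia)). lra.
Qed.

Lemma amgm (p q x y : R) : 0 < p -> 0 < q ->
  (1 - p/q) * x^2 + (1 - q/p) * y^2 <= (x - y)^2.
Proof.
  intros. assert ((x-y)^2 - ((1 - p/q) * x^2 + (1 - q/p) * y^2) = (p*x - q*y)^2 / (p*q))
    by (field; lra).
  assert (0 <= (p*x - q*y)^2 / (p*q)).
  { apply Rdiv_le_0_compat. apply pow2_ge_0. nra. }
  lra.
Qed.

Definition rd (a : nat -> R) (n : nat) : R := a n - 2 * a (pred n) + a (pred (pred n)).

Lemma real_main (a : nat -> R) (N : nat) : a 0%nat = 0 -> a 1%nat = 0 ->
  (forall n, (N < n)%nat -> a n = 0) ->
  sm (fun n => rho n * a n ^ 2) (S N) <= sm (fun n => rd a n ^ 2) (S N).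
Proof.
  intros a0 a1 aN.
  set (b := fun n => a n - a (pred n)).
  assert (E0 : sm (fun n => rd a n ^ 2) (S N) = sm (fun n => (b n - b (pred n))^2) (S N)).
  { apply sm_ext. intros. unfold rd, b. f_equal. ring. }
  rewrite E0.
  set (V := fun n => U n / h n).
  assert (Vnn : forall n, (2 <= n)%nat -> 0 <= V n).
  { intros n Hn. unfold V. destruct n as [|[|k]]; try lia.
    apply Rdiv_le_0_compat. apply U_nonneg. apply h_pos. lia. }
  assert (HA : sm (fun n => V n * b n ^ 2) (S N) <= sm (fun n => (b n - b (pred n))^2) (S N)).
  { eapply Rle_trans; [| apply (sm_le (fun n => (1 - h (pred n) / h n) * b n ^ 2 +
        (1 - h n / h (pred n)) * b (pred n) ^ 2))].
    2: { intros n Hn. apply amgm; apply h_pos; lia. }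
    rewrite (sm_shift (fun n => (1 - h (pred n) / h n) * b n ^ 2)
                    (fun n => (1 - h n / h (pred n)) * b (pred n) ^ 2)).
    simpl pred.
    replace (b 1%nat) with 0 by (unfold b; simpl; rewrite a1, a0; ring).
    replace (b (S (S N))) with 0 by (unfold b; simpl; rewrite !aN by lia; ring).
    rewrite (sm_ext (fun n => (1 - h (Nat.pred n) / h n) * b n ^ 2 + (1 - h (S n) / h n) * b n ^ 2) (fun n => V n * b n ^ 2)).
    2: { intros n Hn. unfold V, U. simpl pred.
       pose proof (h_pos n ltac:(lia)). field. lra. }
    lra. }
  assert (HD : sm (fun n => rho n * a n ^ 2) (S N) <= sm (fun n => V n * b n ^ 2) (S N)).
  { eapply Rle_trans; [| apply (sm_le (fun n => V n * ((1 - g (pred n) / g n) * a n ^ 2 +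
        (1 - g n / g (pred n)) * a (pred n) ^ 2)))].
    2: { intros n Hn. apply Rmult_le_compat_l. auto. apply amgm; apply g_pos; lia. }
    rewrite (sm_ext (fun n => V n * ((1 - g (pred n) / g n) * a n ^ 2 +
        (1 - g n / g (pred n)) * a (pred n) ^ 2)) (fun n => V n * (1 - g (pred n) / g n) * a n ^ 2 +
        V n * (1 - g n / g (pred n)) * a (pred n) ^ 2)) by (intros; ring).
    rewrite (sm_shift (fun n => V n * (1 - g (pred n) / g n) * a n ^ 2)
                    (fun n => V n * (1 - g n / g (pred n)) * a (pred n) ^ 2)).
    simpl pred. rewrite a1, (aN (S (S N))) by lia.
    rewrite (sm_ext (fun n => V n * (1 - g (Nat.pred n) / g n) * a n ^ 2 + V (S n) * (1 - g (S n) / g n) * a n ^ 2) (fun n => rho n * a n ^ 2)). lra.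
    intros n Hn. destruct n as [|[|k]]; try lia.
    pose proof (rho_id k). unfold V. simpl pred.
    pose proof (h_pos (S (S k)) ltac:(lia)).
    pose proof (h_pos (S (S (S k))) ltac:(lia)).
    pose proof (g_pos (S (S k)) ltac:(lia)).
    assert (Hr : rho (S (S k)) = (U (S (S k)) - U (S (S (S k)))) / g (S (S k))) by (field_simplify_eq; lra).
    rewrite Hr. unfold h in *. simpl pred in *. field. lra. }
  lra.
Qed.

Lemma sum_const_tail (F : nat -> R) (M : nat) : (forall n, (M < n)%nat -> F n = 0) ->
  forall p, (M <= p)%nat -> sum_f_R0 F p = sum_f_R0 F M.
Proof.
  intros H p Hp. induction p.
  - assert (M = 0%nat) by lia. subst. reflexivity.
  - destruct (Nat.eq_dec M (S p)) as [->|ne]. reflexivity.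
    simpl. rewrite IHp by lia. rewrite (H (S p)) by lia. ring.
Qed.

Lemma Series_fin (F : nat -> R) (M : nat) : (forall n, (M < n)%nat -> F n = 0) ->
  Series F = sum_f_R0 F M.
Proof.
  intros H. unfold Series.
  assert (is_lim_seq (sum_n F) (sum_f_R0 F M)).
  { eapply is_lim_seq_ext_loc; [| apply is_lim_seq_const].
    exists M. intros p Hp. rewrite sum_n_Reals. symmetry. apply sum_const_tail; auto. }
  rewrite (is_lim_seq_unique _ _ H0). reflexivity.
Qed.

Lemma sum_sm (f : nat -> R) k :
  sum_f_R0 (fun n => if (n <? 2)%nat then 0 else f n) (S k) = sm f k.
Proof. induction k; simpl. lra. rewrite <- IHk. simpl. ring. Qed.

Lemma Series_sm (f : nat -> R) N : (forall n, (S (S N) < n)%nat -> f n = 0) ->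
  Series (fun n => if (n <? 2)%nat then 0 else f n) = sm f (S N).
Proof.
  intros H. rewrite (Series_fin _ (S (S N))). apply sum_sm.
  intros n Hn. destruct (n <? 2)%nat; auto.
Qed.

Lemma Cmod2 (z : C) : Cmod z ^ 2 = fst z ^ 2 + snd z ^ 2.
Proof. unfold Cmod. apply pow2_sqrt. nra. Qed.

Theorem proposition5p1 (A : nat -> C) :
  finitely_supported A ->
  A 0%nat = RtoC 0 -> A 1%nat = RtoC 0 ->
  (exists n : nat, A n <> RtoC 0) ->
  Series (fun n => if (n <? 1)%nat then 0 else (Cmod (second_diff A n)) ^ 2)
    >= Series (fun n => if (n <? 2)%nat then 0 else rho n * (Cmod (A n)) ^ 2)
  /\ Series (fun n => if (n <? 2)%nat then 0 else rho n * (Cmod (A n)) ^ 2)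
    > 9 / 16 * Series (fun n => if (n <? 2)%nat then 0
                                else (Cmod (A n)) ^ 2 / INR n ^ 4)
  /\ 9 / 16 * Series (fun n => if (n <? 2)%nat then 0
                                else (Cmod (A n)) ^ 2 / INR n ^ 4)
    >= 9 / 16 * Series (fun n => if (n <? 1)%nat then 0
                         else (Cmod (A n)) ^ 2 / (INR n ^ 2 * (INR n + 1) ^ 2)).
Proof.
  intros [N HN] A0 A1 [j Hj].
  set (ar := fun k => fst (A k)). set (ai := fun k => snd (A k)).
  assert (ar0 : ar 0%nat = 0) by (unfold ar; rewrite A0; reflexivity).
  assert (ai0 : ai 0%nat = 0) by (unfold ai; rewrite A0; reflexivity).
  assert (ar1 : ar 1%nat = 0) by (unfold ar; rewrite A1; reflexivity).
  assert (ai1 : ai 1%nat = 0) by (unfold ai; rewrite A1; reflexivity).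
  assert (arN : forall n, (N < n)%nat -> ar n = 0) by (intros; unfold ar; rewrite HN; auto).
  assert (aiN : forall n, (N < n)%nat -> ai n = 0) by (intros; unfold ai; rewrite HN; auto).
  assert (CA : forall n, Cmod (A n) ^ 2 = ar n ^ 2 + ai n ^ 2) by (intros; apply Cmod2).
  assert (AN : forall n, (N < n)%nat -> Cmod (A n) ^ 2 = 0).
  { intros n Hn. rewrite CA, arN, aiN by lia. ring. }
  assert (E1 : Series (fun n => if (n <? 1)%nat then 0 else (Cmod (second_diff A n)) ^ 2)
             = sm (fun n => rd ar n ^ 2 + rd ai n ^ 2) (S N)).
  { rewrite <- Series_sm.
    - apply Series_ext. intros n. rewrite Cmod2.
      destruct n as [|[|n]]; simpl; auto.
      + rewrite A0, A1. simpl. ring.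
      + unfold rd, ar, ai. simpl. ring.
    - intros n Hn. unfold rd. destruct n as [|[|n]]; try lia. simpl pred.
      rewrite !arN, !aiN by lia. ring. }
  assert (E2 : Series (fun n => if (n <? 2)%nat then 0 else rho n * (Cmod (A n)) ^ 2)
             = sm (fun n => rho n * (Cmod (A n)) ^ 2) (S N)).
  { apply Series_sm. intros n Hn. rewrite AN by lia. ring. }
  assert (E3 : Series (fun n => if (n <? 2)%nat then 0 else (Cmod (A n)) ^ 2 / INR n ^ 4)
             = sm (fun n => (Cmod (A n)) ^ 2 / INR n ^ 4) (S N)).
  { apply Series_sm. intros n Hn. rewrite AN by lia. unfold Rdiv. ring. }
  assert (E4 : Series (fun n => if (n <? 1)%nat then 0
                         else (Cmod (A n)) ^ 2 / (INR n ^ 2 * (INR n + 1) ^ 2))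
             = sm (fun n => (Cmod (A n)) ^ 2 / (INR n ^ 2 * (INR n + 1) ^ 2)) (S N)).
  { rewrite <- Series_sm.
    - apply Series_ext. intros n. destruct n as [|[|n]]; simpl; auto.
      assert (HC1 : Cmod (A 1%nat) = 0) by (rewrite A1; apply Cmod_0).
      rewrite HC1. unfold Rdiv. ring.
    - intros n Hn. rewrite AN by lia. unfold Rdiv. ring. }
  rewrite E1, E2, E3, E4.
  split; [|split].
  - rewrite sm_plus.
    rewrite (sm_ext (fun n => rho n * Cmod (A n) ^ 2) (fun n => rho n * ar n ^ 2 + rho n * ai n ^ 2)) by (intros; rewrite CA; ring).
    rewrite sm_plus.
    pose proof (real_main ar N ar0 ar1 arN).
    pose proof (real_main ai N ai0 ai1 aiN). lra.
  - rewrite <- sm_scal. apply Rminus_gt_0_lt. rewrite <- sm_minus.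
    assert (Hj2 : (2 <= j)%nat).
    { destruct j as [|[|j]]; [rewrite A0 in Hj | rewrite A1 in Hj | lia]; congruence. }
    assert (HjN : (j <= N)%nat).
    { destruct (Nat.le_gt_cases j N); auto. exfalso. apply Hj. apply HN. lia. }
    apply (sm_pos _ _ j).
    + intros n Hn. pose proof (rho_lower n Hn).
      assert (0 <= Cmod (A n) ^ 2) by (apply pow2_ge_0).
      replace (rho n * Cmod (A n) ^ 2 - 9 / 16 * (Cmod (A n) ^ 2 / INR n ^ 4))
        with (Cmod (A n) ^ 2 * (rho n - 9/16 * / INR n ^ 4)) by (unfold Rdiv; ring).
      apply Rmult_le_pos; lra.
    + lia.
    + pose proof (rho_lower j Hj2).
      assert (0 < Cmod (A j)) by (apply Cmod_gt_0; auto).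
      assert (0 < Cmod (A j) ^ 2) by (apply pow_lt; lra).
      replace (rho j * Cmod (A j) ^ 2 - 9 / 16 * (Cmod (A j) ^ 2 / INR j ^ 4))
        with (Cmod (A j) ^ 2 * (rho j - 9/16 * / INR j ^ 4)) by (unfold Rdiv; ring).
      apply Rmult_lt_0_compat; lra.
  - apply Rle_ge. apply Rmult_le_compat_l. lra. apply sm_le.
    intros n Hn. assert (H1 : 2 <= INR n) by (apply (le_INR 2); lia).
    apply Rmult_le_compat_l. apply pow2_ge_0.
    apply Rinv_le_contravar. apply pow_lt; lra.
    assert (INR n ^ 4 <= INR n ^ 2 * INR n ^ 2) by lra.
    assert (INR n ^ 2 <= (INR n + 1) ^ 2) by (apply pow_incr; lra).
    assert (0 <= INR n ^ 2) by apply pow2_ge_0. nra.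
Qed.
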